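(* Let $V$ be a real vector space with $m=\dim V>1$, and let $A\subset V$ be a finite set spanning $V$ with $0\notin A$ and no two elements of $A$ parallel. Let $B\subset A$ be a basis of $V$ such that the graph $G(B;A)$ is connected. Then there is a compact convex polytope $C\subset V$ with nonempty interior such that (with normals taken with respect to $[\cdot,\cdot]_B$): (i) the normal of each face of $C$ is an element of $A$; (ii) there is a vertex $v$ of $C$ lying at the intersection of exactly $m$ faces of $C$, each of which is normal to some element of $B$; (iii) $v$ is the unique vertex of $C$ with property (ii).
   Context: $[\cdot,\cdot]_B$ is the inner product on $V$ for which $B$ is orthonormal. $G(B;A)$ is the graph with vertex set $B$ and an edge between distinct $x,y\in B$ whenever there is $z\in A\setminus B$ with $[x,z]_B\ne0$ and $[y,z]_B\ne0$. Faces of $C$ are its $(m-1)$-dimensional faces. *)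

(* Defs.v *)
From HB Require Import structures.
From mathcomp Require Import all_boot all_order all_algebra.
From mathcomp Require Import classical_sets reals.
Set Implicit Arguments. Unset Strict Implicit. Unset Printing Implicit Defensive.
Import Order.TTheory GRing.Theory Num.Theory.
Local Open Scope ring_scope.
Local Open Scope classical_set_scope.

Section Defs.
Variables (R : realType) (V : vectType R).

(* [x,y]_B : the inner product for which the basis B (a list) is orthonormal *)
Definition ipB (B : seq V) (x y : V) : R :=
  \sum_(i < size B) coord (in_tuple B) i x * coord (in_tuple B) i y.

Definition Gedge (A B : seq V) : rel V := fun x y =>
  [&& x \in B, y \in B, x != y &
      has (fun z => [&& z \notin B, ipB B x z != 0 & ipB B y z != 0]) A].

Definition Gconnected (A B : seq V) : Prop :=
  forall x y, x \in B -> y \in B ->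
    exists p : seq V, path (Gedge A B) x p /\ last x p = y.

Definition conv (P : seq V) : set V :=
  [set x | exists w : 'I_(size P) -> R,
     (forall i, 0 <= w i) /\ \sum_i w i = 1 /\ x = \sum_i w i *: P`_i].

Definition nonempty_interior (B : seq V) (C : set V) : Prop :=
  exists x0 (e : R), 0 < e /\ forall y, ipB B (y - x0) (y - x0) < e -> C y.

Definition supports (B : seq V) (C : set V) (u : V) (c : R) : Prop :=
  forall x, C x -> ipB B u x <= c.

Definition hyperface (B : seq V) (C : set V) (u : V) (c : R) : set V :=
  [set x | C x /\ ipB B u x = c].

(* (m-1)-dimensional faces (facets) of C, m = dim V *)
Definition is_facet (B : seq V) (C : set V) (F : set V) : Prop :=
  exists (u : V) (c : R), u != 0 /\ supports B C u c /\ F = hyperface B C u c /\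
    exists (x0 : V) (xs : seq V), size xs = (\dim (fullv : {vspace V})).-1 /\
      free [seq x - x0 | x <- xs] /\ F x0 /\ (forall x, x \in xs -> F x).

Definition facet_normal (B : seq V) (C : set V) (F : set V) (a : V) : Prop :=
  exists c : R, (supports B C a c \/ supports B C (- a) (- c)) /\ F = hyperface B C a c.

Definition is_vertex (B : seq V) (C : set V) (v : V) : Prop :=
  exists (u : V) (c : R), u != 0 /\ supports B C u c /\ hyperface B C u c = [set v].

Definition prop_ii (B : seq V) (C : set V) (v : V) : Prop :=
  exists F : 'I_(\dim (fullv : {vspace V})) -> set V,
    injective F /\
    (forall i, is_facet B C (F i) /\ F i v /\
               exists2 b, b \in B & facet_normal B C (F i) b) /\
    (forall G, is_facet B C G -> G v -> exists i, G = F i).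

End Defs.

(* Main.v *)
Require Import Defs.
From HB Require Import structures.
From mathcomp Require Import all_boot all_order all_algebra.
From mathcomp Require Import classical_sets reals boolp.
From mathcomp Require Import lra ring.
Import Order.TTheory GRing.Theory Num.Theory.
Local Open Scope ring_scope.
Local Open Scope classical_set_scope.
Set Implicit Arguments. Unset Strict Implicit. Unset Printing Implicit Defensive.

Section IP.
Variables (R : realType) (V : vectType R) (B : seq V).
Local Notation ip := (ipB B).
Local Notation c i x := (coord (in_tuple B) i x).

Lemma ipBC x y : ip x y = ip y x.
Proof. by rewrite /ipB; apply: eq_bigr => i _; rewrite mulrC. Qed.

Lemma ipBDr x y z : ip x (y + z) = ip x y + ip x z.
Proof. by rewrite /ipB -big_split; apply: eq_bigr => i _; rewrite linearD mulrDr. Qed.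

Lemma ipBZr x a y : ip x (a *: y) = a * ip x y.
Proof. by rewrite /ipB mulr_sumr; apply: eq_bigr => i _; rewrite linearZ /= mulrCA. Qed.

Lemma ipB0r x : ip x 0 = 0.
Proof. by rewrite -(scale0r 0) ipBZr mul0r. Qed.

Lemma ipBNr x y : ip x (- y) = - ip x y.
Proof. by rewrite -scaleN1r ipBZr mulN1r. Qed.

Lemma ipBBr x y z : ip x (y - z) = ip x y - ip x z.
Proof. by rewrite ipBDr ipBNr. Qed.

Lemma ipBDl x y z : ip (y + z) x = ip y x + ip z x.
Proof. by rewrite ipBC ipBDr !(ipBC x). Qed.
Lemma ipBZl x a y : ip (a *: y) x = a * ip y x.
Proof. by rewrite ipBC ipBZr ipBC. Qed.
Lemma ipBNl x y : ip (- y) x = - ip y x.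
Proof. by rewrite ipBC ipBNr ipBC. Qed.
Lemma ipBBl x y z : ip (y - z) x = ip y x - ip z x.
Proof. by rewrite ipBC ipBBr !(ipBC x). Qed.
Lemma ipB0l x : ip 0 x = 0.
Proof. by rewrite ipBC ipB0r. Qed.

Lemma ipB_sumr I (r : seq I) (P : pred I) (F : I -> V) x :
  ip x (\sum_(j <- r | P j) F j) = \sum_(j <- r | P j) ip x (F j).
Proof.
by elim/big_rec2: _ => [|j y1 y2 _ <-]; rewrite ?ipB0r // ipBDr.
Qed.

Lemma ipB_ge0 x : 0 <= ip x x.
Proof. by apply: sumr_ge0 => i _; rewrite -expr2 sqr_ge0. Qed.

Hypothesis basB : basis_of fullv B.

Lemma ipB_eq0 x : ip x x = 0 -> x = 0.
Proof.
move=> h.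
have h0 : forall i, c i x = 0.
  move=> i; apply/eqP; rewrite -sqrf_eq0 expr2; apply/eqP.
  by apply: (psumr_eq0P (P := predT) (F := fun i => c i x * c i x)) => // j _; rewrite -expr2 sqr_ge0.
rewrite (coord_basis (X := in_tuple B) basB (memvf x)).
by rewrite big1 // => i _; rewrite h0 scale0r.
Qed.

Lemma ipB_gt0 x : x != 0 -> 0 < ip x x.
Proof. by move=> nx; rewrite lt_def ipB_ge0 andbT; apply: contra nx => /eqP /ipB_eq0 ->. Qed.

Lemma ipB_basis (i : 'I_(size B)) x : ip B`_i x = c i x.
Proof.
rewrite /ipB (bigD1 i) //= big1 ?addr0.
  by rewrite (coord_free (X := in_tuple B) i i (basis_free basB)) eqxx mul1r.
by move=> j ji; rewrite (coord_free (X := in_tuple B) i j (basis_free basB)) eq_sym (negbTE ji) mul0r.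
Qed.

Lemma ipB_coord x y : ip x y = \sum_(i < size B) c i x * c i y.
Proof. by []. Qed.

End IP.

Section Poly.
Variables (R : realType) (V : vectType R) (B : seq V) (K : finType) (n : K -> V) (h : K -> R).
Local Notation ip := (ipB B).
Hypothesis basB : basis_of fullv B.

Definition Hpoly : set V := [set x | forall k, ip (n k) x <= h k].

Lemma ray_max x d : Hpoly x -> (exists k, 0 < ip (n k) d) ->
  (forall k, 0 < ip (n k) d -> ip (n k) x < h k) ->
  exists t, 0 < t /\ Hpoly (x + t *: d) /\
    exists k, ip (n k) x < h k /\ ip (n k) (x + t *: d) = h k.
Proof.
move=> Hx [k0 k0p] strict.
pose F k := (h k - ip (n k) x) / ip (n k) d.
pose P := fun k => 0 < ip (n k) d.
case: (@arg_minP _ R K k0 P F k0p) => ks Pks ksmin.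
have sl k : P k -> 0 < h k - ip (n k) x by move=> Pk; rewrite subr_gt0 strict.
exists (F ks); split; first by rewrite divr_gt0 // sl.
split.
  move=> k; rewrite ipBDr ipBZr.
  have [Pk|nPk] := boolP (P k).
    have hle : F ks * ip (n k) d <= F k * ip (n k) d by rewrite ler_pM2r // ksmin.
    move: hle; rewrite {2}/F mulfVK ?gt_eqF // => hle; lra.
  have : F ks * ip (n k) d <= 0.
    apply: mulr_ge0_le0; first by apply: ltW; rewrite divr_gt0 ?sl.
    by move: nPk; rewrite /P ltNge negbK.
  have := Hx k; lra.
exists ks; split; first by apply: strict.
rewrite ipBDr ipBZr /F mulfVK ?subrKC //.
by rewrite gt_eqF.
Qed.

Section Conv.
Variable P : seq V.

Lemma conv_pt i : (i < size P)%N -> conv P P`_i.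
Proof.
move=> ilt; exists (fun j => ((j : nat) == i)%:R); split; first by move=> j; rewrite ler0n.
split.
  by rewrite (bigD1 (Ordinal ilt)) //= eqxx big1 ?addr0 // => j /negbTE; rewrite -val_eqE /= => ->.
rewrite (bigD1 (Ordinal ilt)) //= eqxx scale1r big1 ?addr0 // => j /negbTE.
by rewrite -val_eqE /= => ->; rewrite scale0r.
Qed.

Lemma conv_comb x y (t : R) : conv P x -> conv P y -> 0 <= t <= 1 ->
  conv P (t *: x + (1 - t) *: y).
Proof.
move=> [w1 [w1p [w1s ->]]] [w2 [w2p [w2s ->]]] /andP [t0 t1].
exists (fun i => t * w1 i + (1 - t) * w2 i); split.
  by move=> i; rewrite addr_ge0 // mulr_ge0 // subr_ge0.
split.
  have -> : \sum_i (t * w1 i + (1 - t) * w2 i) = t * \sum_i w1 i + (1 - t) * \sum_i w2 i.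
    by rewrite big_split /= !mulr_sumr.
  by rewrite w1s w2s !mulr1 addrC subrK.
rewrite !scaler_sumr -big_split /=; apply: eq_bigr => i _.
by rewrite !scalerA scalerDl.
Qed.

Lemma conv_sub : (forall i, (i < size P)%N -> Hpoly P`_i) -> forall x, conv P x -> Hpoly x.
Proof.
move=> HP x [w [wp [ws ->]]] k.
rewrite ipB_sumr.
apply: (le_trans (y := \sum_i w i * h k)); last by rewrite -mulr_suml ws mul1r.
by apply: ler_sum => i _; rewrite ipBZr ler_wpM2l // HP.
Qed.
End Conv.


Hypothesis bnd : forall d, d != 0 -> exists k, 0 < ip (n k) d.

Definition inact x : {set K} := [set k | ip (n k) x < h k].
Definition actset x : {set K} := [set k | ip (n k) x == h k].
Definition bfs x := Hpoly x /\ forall d, (forall k, ip (n k) x = h k -> ip (n k) d = 0) -> d = 0.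

Definition pickS (S : {set K}) : option V :=
  match pselect (exists x, bfs x /\ actset x = S) with
  | left e => Some (proj1_sig (cid e)) | right _ => None end.
Definition Ppts := pmap pickS (enum [set: {set K}]).

Lemma bfs_uniq x y : bfs x -> bfs y -> actset x = actset y -> x = y.
Proof.
move=> [Hx bx] _ axy; apply/eqP; rewrite -subr_eq0; apply/eqP; apply: bx => k hk.
have : k \in actset y by rewrite -axy inE hk.
by rewrite inE => /eqP hy; rewrite ipBBr hk hy subrr.
Qed.

Lemma pickS_bfs S p : pickS S = Some p -> bfs p.
Proof.
rewrite /pickS; case: pselect => // e [<-].
by case: (proj2_sig (cid e)).
Qed.

Lemma bfs_in x : bfs x -> x \in Ppts.
Proof.
move=> bx; rewrite mem_pmap; apply/mapP; exists (actset x); first by rewrite mem_enum in_setT.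
rewrite /pickS; case: pselect => [e|ne]; last by exfalso; apply: ne; exists x.
by have [bx' ax'] := proj2_sig (cid e); rewrite (bfs_uniq bx' bx ax').
Qed.

Lemma Ppts_H i : (i < size Ppts)%N -> Hpoly Ppts`_i.
Proof.
move=> /(mem_nth 0); rewrite mem_pmap => /mapP [S _ /esym /pickS_bfs].
by case.
Qed.

Lemma step x d : Hpoly x -> d != 0 -> (forall k, ip (n k) x = h k -> ip (n k) d = 0) ->
  exists t, 0 < t /\ Hpoly (x + t *: d) /\ (#|inact (x + t *: d)| < #|inact x|)%N.
Proof.
move=> Hx d0 ad.
have st k : 0 < ip (n k) d -> ip (n k) x < h k.
  move=> pk; rewrite lt_neqAle Hx andbT; apply/eqP => e.
  by move: pk; rewrite ad // ltxx.
have [t [t0 [Ht [ks [ks1 ks2]]]]] := ray_max Hx (bnd d0) st.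
exists t; split => //; split => //.
apply: proper_card; apply/properP; split.
  apply/fintype.subsetP => k; rewrite !inE => lk; rewrite lt_neqAle Hx andbT.
  apply/eqP => e; move: lk; rewrite ipBDr ipBZr ad // mulr0 addr0 e ltxx //.
by exists ks; rewrite !inE // ks2 ltxx.
Qed.

Theorem minkowski x : Hpoly x -> conv Ppts x.
Proof.
have [N] := ubnP #|inact x|; elim: N x => // N IH x le Hx.
have [bx|nbx] := pselect (bfs x).
  have xin := bfs_in bx.
  by rewrite -(nth_index 0 xin); apply: conv_pt; rewrite index_mem.
have [d [ad d0]] : exists d, (forall k, ip (n k) x = h k -> ip (n k) d = 0) /\ d != 0.
  apply: contrapT => ne; apply: nbx; split => // d ad; apply/eqP; apply: contrapT => d0.
  by apply: ne; exists d; split => //; apply/negP.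
have [t1 [t10 [H1 c1]]] := step Hx d0 ad.
have [t2 [t20 [H2 c2]]] := step (d := - d) Hx ltac:(by rewrite oppr_eq0)
  ltac:(by move=> k /ad; rewrite ipBNr => ->; rewrite oppr0).
have T0 : 0 < t1 + t2 by rewrite addr_gt0.
have IH1 := IH _ (leq_trans c1 le) H1.
have IH2 := IH _ (leq_trans c2 le) H2.
set t := t2 / (t1 + t2).
have t0 : 0 <= t by rewrite divr_ge0 // ltW.
have t1le : t <= 1 by rewrite ler_pdivrMr // mul1r lerDr ltW.
have e : t * t1 = (1 - t) * t2.
  rewrite /t; field; by rewrite gt_eqF.
have := conv_comb IH1 IH2 (t := t) ltac:(by rewrite t0 t1le).
congr conv.
rewrite scalerN !scalerDr scalerN !scalerA e addrACA subrr addr0 -scalerDl.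
by rewrite addrC subrK scale1r.
Qed.

Lemma conv_Ppts : conv Ppts = Hpoly.
Proof.
apply/seteqP; split => x; first exact: (@conv_sub Ppts Ppts_H x).
exact: minkowski.
Qed.
End Poly.

Lemma sum_const_seq (R : realType) (T : Type) (s : seq T) (c : R) :
  \sum_(p <- s) c = (size s)%:R * c.
Proof.
elim: s => [|p s IH]; first by rewrite big_nil mul0r.
by rewrite big_cons IH /= mulrS mulrDl mul1r.
Qed.

Section LA.
Variables (R : realType) (V : vectType R) (B : seq V).
Local Notation ip := (ipB B).
Hypothesis basB : basis_of fullv B.

Lemma ip_span0 v (D : seq V) dd : (forall d, d \in D -> ip v d = 0) -> dd \in <<D>>%VS -> ip v dd = 0.
Proof.
move=> h0 /(coord_span (X := in_tuple D)) ->.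
rewrite ipB_sumr big1 // => i _; rewrite ipBZr h0 ?mulr0 //.
by rewrite mem_nth.
Qed.

Lemma LA (D : seq V) u w : free D -> size D = (\dim (fullv : {vspace V})).-1 ->
  (0 < \dim (fullv : {vspace V}))%N -> u != 0 ->
  (forall d, d \in D -> ip u d = 0) -> (forall d, d \in D -> ip w d = 0) ->
  exists l, w = l *: u.
Proof.
move=> fD sD dpos u0 hu hw.
have uD : u \notin <<D>>%VS.
  apply/negP => /(ip_span0 hu) /(ipB_eq0 basB) /eqP; exact/negP.
have fr : free (u :: D) by rewrite free_cons uD.
have full : <<u :: D>>%VS = fullv.
  apply/eqP; rewrite eqEdim subvf /=; move: fr; rewrite /free => /eqP ->.
  by rewrite /= sD prednK.
have : w \in <<u :: D>>%VS by rewrite full memvf.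
rewrite span_cons => /memv_addP [a /vlineP [l ->] [dd ddin wE]].
have h1 := ip_span0 hw ddin.
rewrite wE ipBDl ipBZl (ip_span0 hu ddin) mulr0 add0r in h1.
by exists l; rewrite wE (ipB_eq0 basB h1) addr0.
Qed.
End LA.

Section Facet.
Variables (R : realType) (V : vectType R) (B : seq V) (K : finType) (n : K -> V) (h : K -> R).
Local Notation ip := (ipB B).
Hypothesis basB : basis_of fullv B.
Hypothesis bnd : forall d, d != 0 -> exists k, 0 < ip (n k) d.
Hypothesis nz : forall k, n k != 0.
Local Notation H := (Hpoly B n h).

Lemma facetL u c x0 xs : (1 < \dim (fullv : {vspace V}))%N ->
  u != 0 -> supports B H u c -> H x0 -> ip u x0 = c ->
  (forall x, x \in xs -> H x /\ ip u x = c) ->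
  free [seq x - x0 | x <- xs] -> size xs = (\dim (fullv : {vspace V})).-1 ->
  exists k l, l != 0 /\ n k = l *: u /\ hyperface B H u c = hyperface B H (n k) (h k).
Proof.
move=> dim1 u0 sup Hx0 ux0 Hxs fr sz.
set pts := x0 :: xs.
have ptsH p : p \in pts -> H p /\ ip u p = c.
  by rewrite inE => /orP [/eqP ->|/Hxs].
have m0 : ((size pts)%:R : R) != 0 by rewrite pnatr_eq0.
set y := ((size pts)%:R)^-1 *: \sum_(p <- pts) p.
have ipy v : ip v y = ((size pts)%:R)^-1 * \sum_(p <- pts) ip v p.
  by rewrite ipBZr ipB_sumr.
have ipuy : ip u y = c.
  rewrite ipy (eq_big_seq (fun _ => c)); last by move=> p /ptsH [].
  by rewrite sum_const_seq mulKf.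
have Hy : H y.
  move=> k; rewrite ipy ler_pdivrMl ?ltr0n // -sum_const_seq.
  by rewrite !big_seq; apply: ler_sum => p /ptsH [Hp _]; apply: Hp.
have [k act] : exists k, ip (n k) y = h k.
  apply: contrapT => nk.
  have st k : 0 < ip (n k) u -> ip (n k) y < h k.
    move=> _; rewrite lt_neqAle Hy andbT; apply/eqP => e; apply: nk; by exists k.
  have [t [t0 [Ht _]]] := ray_max Hy (bnd u0) st.
  have := sup _ Ht; rewrite ipBDr ipuy ipBZr.
  have := ipB_gt0 basB u0 => g.
  have : 0 < t * ip u u by rewrite mulr_gt0.
  lra.
have allk p : p \in pts -> ip (n k) p = h k.
  have s0 : \sum_(q <- pts) (h k - ip (n k) q) == 0.
    rewrite sumrB sum_const_seq.
    have -> : \sum_(q <- pts) ip (n k) q = (size pts)%:R * ip (n k) y.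
      by rewrite ipy mulVKf.
    by rewrite act subrr.
  move: s0; rewrite big_seq psumr_eq0; last by move=> q /ptsH [Hq _]; rewrite subr_ge0.
  move=> /allP al pin; have := al p pin; rewrite pin /= subr_eq0 => /eqP; done.
have D0u d : d \in [seq x - x0 | x <- xs] -> ip u d = 0.
  case/mapP => x xin ->; rewrite ipBBr (proj2 (Hxs _ xin)) ux0 subrr //.
have D0n d : d \in [seq x - x0 | x <- xs] -> ip (n k) d = 0.
  case/mapP => x xin ->.
  have x0in : x0 \in pts by rewrite inE eqxx.
  have xin' : x \in pts by rewrite inE xin orbT.
  by rewrite ipBBr (allk _ x0in) (allk _ xin') subrr.
have [l nl] := LA basB fr ltac:(by rewrite size_map) ltac:(by apply: ltnW) u0 D0u D0n.
have l0 : l != 0 by apply: contraNneq (nz k); rewrite nl => ->; rewrite scale0r.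
exists k, l; split => //; split => //.
move: act; rewrite nl ipBZl ipuy => act.
apply/seteqP; split => x [Hx e]; split => //.
  by rewrite ipBZl e act.
by move: e; rewrite ipBZl -act => /(mulfI l0).
Qed.
End Facet.

Lemma hyperface_scale (R : realType) (V : vectType R) (B : seq V) (C : set V) (a : V) (mu c : R) :
  mu != 0 -> hyperface B C (mu *: a) c = hyperface B C a (c / mu).
Proof.
move=> m0; apply/seteqP; split => x [Cx e]; split => //; move: e; rewrite ipBZl.
  by move=> <-; rewrite [mu * _]mulrC mulfK.
by move=> ->; rewrite mulrC divfK.
Qed.

Lemma ip_sq_le (R : realType) (V : vectType R) (B : seq V) (j : 'I_(size B)) x :
  coord (in_tuple B) j x * coord (in_tuple B) j x <= ipB B x x.
Proof.
rewrite /ipB (bigD1 j) //= lerDl; apply: sumr_ge0 => i _; rewrite -expr2 sqr_ge0 //.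
Qed.

Lemma ip_abs_le (R : realType) (V : vectType R) (B : seq V) u d :
  `|ipB B u d| <= \sum_(j < size B) `|coord (in_tuple B) j u| * `|coord (in_tuple B) j d|.
Proof.
rewrite ipB_coord; apply: le_trans (ler_norm_sum _ _ _) _.
by apply: ler_sum => j _; rewrite normrM.
Qed.

Section Interior.
Variables (R : realType) (V : vectType R) (B : seq V) (K : finType) (n : K -> V) (h : K -> R).
Local Notation ip := (ipB B).
Local Notation H := (Hpoly B n h).

Lemma interior_of_strict (k0 : K) p : (forall k, ip (n k) p < h k) -> nonempty_interior B H.
Proof.
move=> st.
pose sl k := h k - ip (n k) p.
case: (@arg_minP _ R K k0 predT sl isT) => km _ kmin.
have sm0 : 0 < sl km by rewrite subr_gt0.
pose L := 1 + \sum_k \sum_(j < size B) `|coord (in_tuple B) j (n k)|.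
have L1 : 1 <= L by rewrite lerDl; apply: sumr_ge0 => k _; apply: sumr_ge0 => j _; apply: normr_ge0.
have L0 : 0 < L by apply: lt_le_trans L1.
pose d0 := sl km / L.
have d00 : 0 < d0 by rewrite divr_gt0.
exists p, (d0 * d0); split; first by rewrite mulr_gt0.
move=> y hy k.
have cj j : `|coord (in_tuple B) j (y - p)| <= d0.
  have := ip_sq_le j (y - p) => h1.
  have h2 : coord (in_tuple B) j (y - p) * coord (in_tuple B) j (y - p) < d0 * d0 by apply: le_lt_trans hy.
  rewrite ler_norml; apply/andP; split; nra.
have Lk : \sum_(j < size B) `|coord (in_tuple B) j (n k)| <= L.
  have S1 : \sum_(j < size B) `|coord (in_tuple B) j (n k)| <=
      \sum_k \sum_(j < size B) `|coord (in_tuple B) j (n k)|.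
    rewrite [X in _ <= X](bigD1 k) //= lerDl; apply: sumr_ge0 => i _; apply: sumr_ge0 => j _; apply: normr_ge0.
  rewrite /L; lra.
have : ip (n k) (y - p) <= d0 * L.
  apply: le_trans (ler_norm _) _; apply: le_trans (ip_abs_le _ _ _) _.
  apply: (le_trans (y := \sum_(j < size B) `|coord (in_tuple B) j (n k)| * d0)).
    by apply: ler_sum => j _; rewrite ler_wpM2l.
  rewrite -mulr_suml mulrC ler_pM2l //; exact: Lk.
rewrite /d0 divfK ?gt_eqF // ipBBr.
have := kmin k isT; rewrite /sl; lra.
Qed.
End Interior.

Section Inst.
Variables (R : realType) (V : vectType R) (A B : seq V).
Hypothesis dim1 : (1 < \dim (fullv : {vspace V}))%N.
Hypothesis A0 : 0 \notin A.
Hypothesis npar : forall a b, a \in A -> b \in A -> a != b -> forall k : R, a != k *: b.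
Hypothesis BA : {subset B <= A}.
Hypothesis basB : basis_of fullv B.
Hypothesis conn : Gconnected A B.

Local Notation s := (size B).
Local Notation c j x := (coord (in_tuple B) j x).
Local Notation ip := (ipB B).

Lemma dimE : \dim (fullv : {vspace V}) = s.
Proof. exact: (size_basis (X := in_tuple B) basB). Qed.

Lemma s1 : (1 < s)%N.
Proof. by rewrite -dimE. Qed.

Lemma uniqB : uniq B.
Proof. exact: free_uniq (basis_free basB). Qed.

Lemma cB (i j : 'I_s) : c j (B`_i) = (i == j)%:R.
Proof. exact: (coord_free (X := in_tuple B) i j (basis_free basB)). Qed.

Lemma Bin (i : 'I_s) : B`_i \in B.
Proof. exact: mem_nth. Qed.

Lemma Bnz (i : 'I_s) : B`_i != 0.
Proof. exact: basis_not0 basB (Bin i). Qed.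

Lemma Binj (i j : 'I_s) : B`_i = B`_j -> i = j.
Proof. by move=> e; apply/val_inj/eqP; rewrite -(nth_uniq 0 (ltn_ord i) (ltn_ord j) uniqB) e. Qed.

Lemma coord0 (x : V) : (forall j : 'I_s, c j x = 0) -> x = 0.
Proof.
move=> h0; rewrite (coord_basis (X := in_tuple B) basB (memvf x)).
by rewrite big1 // => i _; rewrite h0 scale0r.
Qed.

Lemma exz (i : 'I_s) : exists z, [/\ z \in A, z \notin B & c i z != 0].
Proof.
have [j ji] : exists j : 'I_s, j != i.
  have s0 : (0 < s)%N by apply: ltn_trans s1.
  case: (eqVneq (val i) 0%N) => i0.
    by exists (Ordinal s1); apply/eqP => /(congr1 val) /=; rewrite i0.
  by exists (Ordinal s0); apply: contra i0 => /eqP <-.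
have [p [pth lst]] := conn (Bin i) (Bin j).
case: p pth lst => [_ /= /Binj e|y p /= /andP [e _] _]; first by rewrite e eqxx in ji.
move: e; rewrite /Gedge => /and4P [_ _ _ /hasP [z zA /and3P [zB zi _]]].
by exists z; split => //; rewrite -ipB_basis.
Qed.

Definition zf (i : 'I_s) := proj1_sig (cid (exz i)).
Lemma zfP i : [/\ zf i \in A, zf i \notin B & c i (zf i) != 0].
Proof. exact: proj2_sig (cid (exz i)). Qed.

Definition zh (i : 'I_s) := (c i (zf i))^-1 *: zf i.
Lemma czh i : c i (zh i) = 1.
Proof. by rewrite /zh linearZ /= mulVf //; case: (zfP i). Qed.

Definition aa (i j : 'I_s) := c j (zh i).
Definition Zs := \sum_(i < s) \sum_(j < s) `|aa i j|.
Definition ZZ := 1 + Zs.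
Definition r := (2 * ZZ)^-1.
Definition M (j : 'I_s) := r ^+ j.
Definition hh := r ^+ s / 4%:R.
Definition delta := hh / ZZ.

Lemma Zs0 : 0 <= Zs.
Proof. by apply: sumr_ge0 => i _; apply: sumr_ge0 => j _; apply: normr_ge0. Qed.
Lemma ZZ1 : 1 <= ZZ.
Proof. by have := Zs0; rewrite /ZZ; lra. Qed.
Lemma ZZ0 : 0 < ZZ.
Proof. exact: lt_le_trans ZZ1. Qed.
Lemma r0 : 0 < r.
Proof. by rewrite /r invr_gt0 mulr_gt0 ?ZZ0. Qed.
Lemma rZ : r * ZZ = 2%:R^-1.
Proof. by rewrite /r invfM -mulrA mulVf ?mulr1 // gt_eqF // ZZ0. Qed.
Lemma r1 : r <= 1.
Proof.
have := rZ; have := ZZ1; have := r0 => h1 h2 h3.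
have : r <= r * ZZ by rewrite ler_pMr.
rewrite h3 => h4; apply: le_trans h4 _; rewrite invf_le1 ?ler1n //.
Qed.

Lemma ler_addr0 (x y : R) : 0 <= y -> x <= x + y.
Proof. move=> h; lra. Qed.

Lemma sum_aa_le (i : 'I_s) : \sum_(j < s) `|aa i j| <= Zs.
Proof.
rewrite /Zs [X in _ <= X](bigD1 i) //=; apply: ler_addr0.
by apply: sumr_ge0 => i' _; apply: sumr_ge0 => j _; apply: normr_ge0.
Qed.
Lemma aa_le (i j : 'I_s) : `|aa i j| <= Zs.
Proof.
apply: le_trans (sum_aa_le i); rewrite [X in _ <= X](bigD1 j) //=; apply: ler_addr0.
by apply: sumr_ge0 => j' _; apply: normr_ge0.
Qed.

Lemma rs_le (j : 'I_s) : r ^+ s <= M j.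
Proof. by rewrite /M; apply: ler_wiXn2l; [apply: ltW; apply: r0|apply: r1|apply: ltnW]. Qed.
Lemma M0 j : 0 < M j.
Proof. by rewrite /M exprn_gt0 // r0. Qed.
Lemma hh0 : 0 < hh.
Proof. by rewrite /hh divr_gt0 ?exprn_gt0 ?r0 ?ltr0n. Qed.
Lemma delta0 : 0 < delta.
Proof. by rewrite /delta divr_gt0 ?hh0 ?ZZ0. Qed.


Lemma delta_le : delta <= r ^+ s / 4%:R.
Proof.
rewrite /delta -/hh ler_pdivrMr ?ZZ0 //.
by rewrite ler_peMr ?ZZ1 // ltW // hh0.
Qed.
Lemma delta_ltM j : delta < M j.
Proof.
apply: le_lt_trans delta_le _; apply: lt_le_trans (rs_le j).
rewrite ltr_pdivrMr ?ltr0n // ltr_pMr ?exprn_gt0 ?r0 //.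
by rewrite ltr1n.
Qed.

Definition Kt := ('I_s * (bool * bool))%type.
Definition sgn (b : bool) : R := if b then 1 else -1.
Definition nK (k : Kt) : V := sgn k.2.2 *: (if k.2.1 then zh k.1 else B`_(k.1)).
Definition hK (k : Kt) : R := if k.2.1 then hh else if k.2.2 then M k.1 else 0.
Local Notation H := (Hpoly B nK hK).

Lemma sgn0 b : sgn b != 0.
Proof. by case: b; rewrite /sgn ?oppr_eq0 oner_eq0. Qed.

Lemma ip_zh i x : ip (zh i) x = \sum_(j < s) aa i j * c j x.
Proof. by []. Qed.
Lemma ipnK_box i sg x : ip (nK (i, (false, sg))) x = sgn sg * c i x.
Proof. by rewrite /nK /= ipBZl ipB_basis. Qed.
Lemma ipnK_cut i sg x : ip (nK (i, (true, sg))) x = sgn sg * ip (zh i) x.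
Proof. by rewrite /nK /= ipBZl. Qed.

Lemma H_lo x i : H x -> 0 <= c i x.
Proof. by move=> /(_ (i, (false, false))); rewrite ipnK_box /= /sgn mulN1r oppr_le0. Qed.
Lemma H_up x i : H x -> c i x <= M i.
Proof. by move=> /(_ (i, (false, true))); rewrite ipnK_box /= /sgn mul1r. Qed.
Lemma H_cut x i : H x -> `|ip (zh i) x| <= hh.
Proof.
move=> Hx; have := Hx (i, (true, true)); have := Hx (i, (true, false)).
rewrite !ipnK_cut /= /sgn mul1r mulN1r => h1 h2.
by rewrite ler_norml h2 andbT lerNl.
Qed.
Lemma H_intro x : (forall i, 0 <= c i x) -> (forall i, c i x <= M i) ->
  (forall i, `|ip (zh i) x| <= hh) -> H x.
Proof.
move=> lo up ct [i [[] []]].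
- by rewrite ipnK_cut /= /sgn mul1r; apply: le_trans (ct i); apply: ler_norm.
- by rewrite ipnK_cut /= /sgn mulN1r; apply: le_trans (ct i); rewrite -normrN; apply: ler_norm.
- by rewrite ipnK_box /= /sgn mul1r.
- by rewrite ipnK_box /= /sgn mulN1r oppr_le0.
Qed.

Lemma bndK d : d != 0 -> exists k, 0 < ip (nK k) d.
Proof.
move=> d0.
have [j cj] : exists j : 'I_s, c j d != 0.
  apply: contrapT => nj; apply: (negP d0); apply/eqP; apply: coord0 => j.
  by apply: contrapT => e; apply: nj; exists j; apply/eqP.
case: (ltrgtP (c j d) 0) => e; last by rewrite e eqxx in cj.
  by exists (j, (false, false)); rewrite ipnK_box /sgn mulN1r oppr_gt0.
by exists (j, (false, true)); rewrite ipnK_box /sgn mul1r.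
Qed.

Lemma zh0 i : zh i != 0.
Proof. by apply/eqP => e; have := czh i; rewrite e linear0 => /eqP; rewrite eq_sym oner_eq0. Qed.

Lemma nzK k : nK k != 0.
Proof.
case: k => i [cut sg]; rewrite /nK /= scaler_eq0 negb_or sgn0 /=.
by case: cut; [apply: zh0 | apply: Bnz].
Qed.

Lemma nKA k : exists a mu, [/\ a \in A, mu != 0 & nK k = mu *: a].
Proof.
case: k => i [[] sg]; rewrite /nK /=.
  exists (zf i), (sgn sg * (c i (zf i))^-1); split.
  - by case: (zfP i).
  - by rewrite mulf_eq0 negb_or sgn0 invr_eq0; case: (zfP i).
  - by rewrite /zh scalerA.
by exists (B`_i), (sgn sg); split => //; [apply: BA; apply: Bin | apply: sgn0].
Qed.

Lemma scale_par (x y : V) (mu l : R) : mu != 0 -> mu *: x = l *: y -> x = (l / mu) *: y.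
Proof. by move=> m0 e; rewrite mulrC -scalerA -e scalerA mulVf ?scale1r. Qed.

Lemma nK_par k (j : 'I_s) l : nK k = l *: B`_j -> k = (j, (false, k.2.2)).
Proof.
case: k => i [cut sg] /=; rewrite /nK /= => e.
case: cut e => e.
  move: e; rewrite /zh scalerA => /scale_par e.
  have := e ltac:(by rewrite mulf_eq0 negb_or sgn0 invr_eq0; case: (zfP i)).
  case: (zfP i) => zA zB _ e'.
  have : zf i != B`_j by apply: contraNneq zB => ->; apply: Bin.
  by move=> /(npar zA (BA (Bin j))) /(_ (l / (sgn sg * (c i (zf i))^-1))); rewrite -e' eqxx.
have e' := scale_par (sgn0 sg) e.
case: (eqVneq i j) => [-> //|ij].
have : B`_i != B`_j by apply: contra ij => /eqP /Binj ->.
by move=> /(npar (BA (Bin i)) (BA (Bin j))) /(_ (l / sgn sg)); rewrite -e' eqxx.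
Qed.

Lemma ler_addl0 (x y : R) : 0 <= y -> x <= y + x.
Proof. move=> h; lra. Qed.

Lemma deltaZZ : delta * ZZ = hh.
Proof. by rewrite /delta divfK // gt_eqF // ZZ0. Qed.

Lemma hh_le (i : 'I_s) : hh <= r ^+ i / 4%:R.
Proof.
rewrite /hh ler_pM2r ?invr_gt0 ?ltr0n //.
by apply: ler_wiXn2l; [apply: ltW; apply: r0|apply: r1|apply: ltnW].
Qed.

Lemma corner w : H w -> (forall j : 'I_s, c j w = 0 \/ c j w = M j) -> w = 0.
Proof.
move=> Hw cw; apply: coord0 => j0; apply: contrapT => nj0.
have Pj0 : c j0 w != 0 by apply/eqP.
case: (@arg_minnP _ j0 (fun j : 'I_s => c j w != 0) (fun j : 'I_s => val j) Pj0) => i Pi imin.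
have ci : c i w = M i by case: (cw i) => // e; rewrite e eqxx in Pi.
have bj j : j != i -> `|aa i j * c j w| <= `|aa i j| * r ^+ i.+1.
  move=> ji; rewrite normrM; apply: ler_wpM2l; first exact: normr_ge0.
  case: (cw j) => e; first by rewrite e normr0 exprn_ge0 // ltW // r0.
  rewrite e ger0_norm ?(ltW (M0 _)) // /M.
  have lij : (i < j)%N.
    rewrite ltn_neqAle imin ?andbT; last by rewrite e gt_eqF // M0.
    by apply: contra ji => /eqP e2; apply/eqP/val_inj.
  by apply: ler_wiXn2l; [apply: ltW; apply: r0|apply: r1|].
set rest := \sum_(j < s | j != i) aa i j * c j w.
have ipE : ip (zh i) w = M i + rest.
  by rewrite ip_zh (bigD1 i) //= /aa czh mul1r ci.
have rb : `|rest| <= Zs * r ^+ i.+1.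
  apply: le_trans (ler_norm_sum _ _ _) _.
  apply: (le_trans (y := \sum_(j < s | j != i) `|aa i j| * r ^+ i.+1)).
    by apply: ler_sum => j ji; apply: bj.
  rewrite -mulr_suml; apply: ler_wpM2r; first by rewrite exprn_ge0 // ltW // r0.
  apply: le_trans (sum_aa_le i); rewrite [X in _ <= X](bigD1 i) //=; apply: ler_addl0.
  exact: normr_ge0.
have X0 : 0 < r ^+ i by rewrite exprn_gt0 // r0.
have zr : Zs * r <= 2%:R^-1.
  rewrite -rZ [Zs * r]mulrC ler_pM2l ?r0 //; apply: ler_addl0; exact: ler01.
have T2 : Zs * r ^+ i.+1 <= r ^+ i / 2%:R.
  have -> : Zs * r ^+ i.+1 = r ^+ i * (Zs * r) by rewrite exprSr; ring.
  by rewrite ler_pM2l.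
have h1 := H_cut i Hw.
have h2 := hh_le i.
have h3 : - rest <= `|rest| by rewrite -normrN ler_norm.
have h4 : ip (zh i) w <= `|ip (zh i) w| by apply: ler_norm.
move: ipE; rewrite /M => ipE.
lra.
Qed.

Lemma ip_zhB (i j : 'I_s) : ip (zh i) B`_j = aa i j.
Proof. by rewrite ipBC (ipB_basis basB). Qed.

Lemma H_dB (j : 'I_s) : H (delta *: B`_j).
Proof.
apply: H_intro => i.
- by rewrite linearZ /= cB mulr_ge0 ?ler0n // ltW // delta0.
- rewrite linearZ /= cB; case: (j == i); rewrite ?mulr1 ?mulr0.
    exact: ltW (delta_ltM _).
  exact: ltW (M0 _).
- rewrite ipBZr ip_zhB normrM gtr0_norm ?delta0 // -deltaZZ.
  rewrite ler_pM2l ?delta0 //; apply: le_trans (aa_le i j) _.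
  by apply: ler_addl0; apply: ler01.
Qed.

Lemma H_0 : H 0.
Proof.
apply: H_intro => i; rewrite ?linear0 ?lexx ?ipB0r ?normr0 //.
- exact: ltW (M0 _).
- exact: ltW (hh0).
Qed.

Definition pint := (delta / 2%:R) *: \sum_(j < s) B`_j.

Lemma c_pint (j : 'I_s) : c j pint = delta / 2%:R.
Proof.
rewrite /pint linearZ /= linear_sum /= (bigD1 j) //= cB eqxx big1 ?addr0 ?mulr1 //.
by move=> i ij; rewrite cB (negbTE ij).
Qed.

Lemma strict_pint k : ip (nK k) pint < hK k.
Proof.
have d0 := delta0.
case: k => i [[] sg].
  rewrite ipnK_cut /= /hK /=.
  have hz : `|ip (zh i) pint| < hh.
    rewrite /pint ipBZr ipB_sumr normrM.
    have -> : \sum_(j < s) ip (zh i) B`_j = \sum_(j < s) aa i j by apply: eq_bigr => j _; rewrite ip_zhB.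
    apply: (le_lt_trans (y := delta / 2%:R * ZZ)).
      have d2 : 0 < delta / 2%:R by rewrite divr_gt0 ?ltr0n.
      rewrite (gtr0_norm d2); apply: ler_wpM2l; first exact: ltW.
      apply: le_trans (ler_norm_sum _ _ _) _; apply: le_trans (sum_aa_le i) _.
      by apply: ler_addl0; apply: ler01.
    rewrite mulrAC deltaZZ ltr_pdivrMr ?ltr0n // ltr_pMr ?hh0 //.
    by rewrite ltr1n.
  case: sg; rewrite /sgn ?mul1r ?mulN1r.
    by apply: le_lt_trans hz; apply: ler_norm.
  by apply: le_lt_trans hz; rewrite -normrN; apply: ler_norm.
rewrite ipnK_box /hK /= c_pint.
case: sg; rewrite /sgn ?mul1r ?mulN1r.
  apply: lt_trans (delta_ltM i); rewrite ltr_pdivrMr ?ltr0n // ltr_pMr //.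
  by rewrite ltr1n.
by rewrite oppr_lt0 divr_gt0 ?ltr0n.
Qed.


Lemma facet_u G u c0 : is_facet B H G -> u != 0 -> supports B H u c0 -> G = hyperface B H u c0 ->
  exists k l, l != 0 /\ nK k = l *: u /\ G = hyperface B H (nK k) (hK k).
Proof.
move=> [u' [c' [_ [_ [_ [x0 [xs [sz [fr [Gx0 Gxs]]]]]]]]]] u0 sup GE.
move: Gx0; rewrite GE => -[Hx0 ex0].
have Hxs x : x \in xs -> H x /\ ip u x = c0 by move=> /Gxs; rewrite GE; case.
have [k [l [l0 [nl hE]]]] := facetL basB bndK nzK dim1 u0 sup Hx0 ex0 Hxs fr sz.
by exists k, l; split => //; split => //; rewrite GE.
Qed.

Lemma facet_gen G : is_facet B H G -> exists k, G = hyperface B H (nK k) (hK k).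
Proof.
move=> fG; have [u [c0 [u0 [sup [GE _]]]]] := fG.
by have [k [l [_ [_ E]]]] := facet_u fG u0 sup GE; exists k.
Qed.

Lemma normal_ok G : is_facet B H G -> exists2 a, a \in A & facet_normal B H G a.
Proof.
move=> /facet_gen [k GE].
have [a [mu [aA mu0 nE]]] := nKA k.
exists a => //; exists (hK k / mu); split; last by rewrite GE nE hyperface_scale.
have Hk x : H x -> mu * ip a x <= hK k by move=> /(_ k); rewrite nE ipBZl.
case: (ltrgtP mu 0) => m; last by rewrite m eqxx in mu0.
  right => x /Hk; rewrite ipBNl lerN2 ler_ndivrMr // mulrC //.
left => x /Hk; rewrite ler_pdivlMr // mulrC //.
Qed.

Lemma ip_sumB x : ip (\sum_(j < s) B`_j) x = \sum_(j < s) c j x.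
Proof. by rewrite ipBC ipB_sumr; apply: eq_bigr => j _; rewrite ipBC ipB_basis. Qed.

Lemma s0 : (0 < s)%N.
Proof. exact: ltn_trans s1. Qed.

Lemma is_vertex0 : is_vertex B H 0.
Proof.
exists (- \sum_(j < s) B`_j), 0; split.
  rewrite oppr_eq0; apply/eqP => e.
  have := ip_sumB (B`_(Ordinal s0)); rewrite e ipB0l => /esym.
  set o := Ordinal s0.
  rewrite (bigD1 o) // (cB o o) eqxx big1 ?addr0; last by move=> j ji; rewrite cB eq_sym (negbTE ji).
  by rewrite /= addr0 => /eqP; rewrite oner_eq0.
split.
  move=> x Hx; rewrite ipBNl ip_sumB oppr_le0; apply: sumr_ge0 => j _; exact: H_lo.
apply/seteqP; split => x.
  move=> [Hx]; rewrite ipBNl ip_sumB => /eqP; rewrite oppr_eq0 => /eqP e /=.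
  apply: coord0 => j; apply: (psumr_eq0P (P := predT) (F := fun j => c j x)) => //.
  by move=> i _; apply: H_lo.
by move=> /= ->; split; [exact: H_0 | rewrite ipB0r].
Qed.

Lemma span_scale (X : seq V) (d : R) : d != 0 -> <<map (fun x => d *: x) X>>%VS = <<X>>%VS.
Proof.
move=> d0; apply: subv_anti; apply/andP; split; apply/span_subvP => x.
  by move=> /mapP [y yX ->]; apply: memvZ; apply: memv_span.
move=> xX; have -> : x = d^-1 *: (d *: x) by rewrite scalerA mulVf ?scale1r.
by apply: memvZ; apply: memv_span; apply: map_f.
Qed.

Lemma free_scale (X : seq V) (d : R) : d != 0 -> free X -> free (map (fun x => d *: x) X).
Proof. by move=> d0; rewrite /free span_scale // size_map. Qed.

Lemma inB_idx b : b \in B -> exists j : 'I_s, b = B`_j.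
Proof.
move=> bB; have ib : (index b B < s)%N by rewrite index_mem.
by exists (Ordinal ib); rewrite /= nth_index.
Qed.

Lemma memF (j : 'I_s) x : hyperface B H (- B`_j) 0 x <-> H x /\ c j x = 0.
Proof.
rewrite /hyperface /= ipBNl (ipB_basis basB); split => -[Hx e]; split => //.
  by apply/eqP; rewrite -oppr_eq0 e.
by rewrite e oppr0.
Qed.

Lemma c_dB (i j : 'I_s) : c i (delta *: B`_j) = delta * (j == i)%:R.
Proof. by rewrite linearZ /= cB. Qed.

Lemma prop_ii0 : prop_ii B H 0.
Proof.
pose cst := cast_ord dimE.
pose F := fun i : 'I_(\dim (fullv : {vspace V})) => hyperface B H (- B`_(cst i)) 0.
exists F; split.
  move=> i i' e; apply/eqP; apply: contraT => ne.
  have ne' : cst i != cst i' by apply: contra ne => /eqP /cast_ord_inj ->.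
  have : F i (delta *: B`_(cst i')).
    by apply/memF; split; [apply: H_dB | rewrite c_dB eq_sym (negbTE ne') mulr0].
  rewrite e => /memF [_]; rewrite c_dB eqxx mulr1 => d0.
  by move: delta0; rewrite d0 ltxx.
split.
  move=> i; rewrite /F; move: (cst i) => j.
  split.
    exists (- B`_j), 0; split; first by rewrite oppr_eq0 Bnz.
    split; first by move=> x Hx; rewrite ipBNl (ipB_basis basB) oppr_le0 H_lo.
    split => //.
    pose Bd := map (fun x => delta *: x) B.
    pose y := delta *: B`_j.
    have fBd : free Bd by apply: free_scale (basis_free basB); rewrite gt_eqF // delta0.
    have yBd : y \in Bd by apply: map_f; apply: Bin.
    exists 0, (filter (predC (pred1 y)) Bd); split.
      rewrite dimE size_filter.
      have := count_predC (pred1 y) Bd.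
      rewrite (count_uniq_mem _ (free_uniq fBd)) yBd size_map => <-.
      by rewrite add1n.
    split.
      have -> : [seq x - 0 | x <- filter (predC (pred1 y)) Bd] = filter (predC (pred1 y)) Bd.
        by rewrite (eq_map (fun x => subr0 x)) map_id.
      exact: filter_free.
    split; first by apply/memF; split; [apply: H_0 | rewrite linear0].
    move=> x; rewrite mem_filter => /andP [xy /mapP [b bB xb]].
    have [j' bj'] := inB_idx bB.
    apply/memF; rewrite xb bj'; split; first exact: H_dB.
    rewrite c_dB; case: (eqVneq j' j) => [ejj|_]; last by rewrite mulr0.
    by move: xy; rewrite /= xb bj' ejj eqxx.
  split; first by apply/memF; split; [apply: H_0 | rewrite linear0].
  exists (B`_j); first exact: Bin.
  exists 0; split; first by right; rewrite oppr0 => x Hx; rewrite ipBNl (ipB_basis basB) oppr_le0 H_lo.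
  apply/seteqP; split => x [Hx e]; split => //; move: e; rewrite ipBNl.
    by move=> /eqP; rewrite oppr_eq0 => /eqP.
  by move=> ->; rewrite oppr0.
move=> G fG G0.
have [[i [cut sg]] GE] := facet_gen fG.
move: G0; rewrite GE => -[_]; rewrite ipB0r.
case: cut GE => GE; rewrite /hK /=.
  by move=> /esym /eqP; rewrite gt_eqF // hh0.
case: sg GE => GE /=.
  by move=> /esym /eqP; rewrite gt_eqF // M0.
move=> _; exists (cast_ord (esym dimE) i).
rewrite /F /cst cast_ordKV /nK /= /sgn scaleN1r //.
Qed.

Lemma facetB G b : is_facet B H G -> b \in B -> facet_normal B H G b ->
  exists (j : 'I_s) (sg : bool), G = hyperface B H (nK (j, (false, sg))) (hK (j, (false, sg))).
Proof.
move=> fG bB [c0 [sup GE]].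
have [j bj] := inB_idx bB.
have b0 : b != 0 by rewrite bj Bnz.
have [k [l [l0 [nl E]]]] : exists k l, l != 0 /\ nK k = l *: b /\ G = hyperface B H (nK k) (hK k).
  case: sup => sup; first exact: facet_u fG b0 sup GE.
  have GE' : G = hyperface B H (- b) (- c0).
    rewrite GE; apply/seteqP; split => x [Hx e]; split => //; move: e; rewrite ipBNl.
      by move=> ->.
    by move/oppr_inj.
  have [k [l [l0 [nl E]]]] := facet_u fG (u := - b) ltac:(by rewrite oppr_eq0) sup GE'.
  by exists k, (- l); split; [rewrite oppr_eq0 | split => //; rewrite nl scalerN scaleNr].
have kE := nK_par (k := k) (j := j) (l := l) ltac:(by rewrite nl bj).
move: kE E; case: k {nl} => i [cut sg] /= [-> ->] E.
by exists j, sg.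
Qed.

Lemma uniq_w w : prop_ii B H w -> w = 0.
Proof.
move=> [F' [injF [hF _]]].
have ex i : exists p : 'I_s * bool,
    F' i = hyperface B H (nK (p.1, (false, p.2))) (hK (p.1, (false, p.2))).
  have [fi [wi [b bB nb]]] := hF i.
  by have [j [sg E]] := facetB fi bB nb; exists (j, sg).
pose g i := proj1_sig (cid (ex i)).
have gP i : F' i = hyperface B H (nK ((g i).1, (false, (g i).2))) (hK ((g i).1, (false, (g i).2))).
  exact: proj2_sig (cid (ex i)).
have wg i : H w /\ ip (nK ((g i).1, (false, (g i).2))) w = hK ((g i).1, (false, (g i).2)).
  by have := (proj1 (proj2 (hF i))); rewrite (gP i).
have cw i : if (g i).2 then c (g i).1 w = M (g i).1 else c (g i).1 w = 0.
  have [_] := wg i; rewrite ipnK_box /hK /=.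
  by case: (g i).2; rewrite /sgn ?mul1r ?mulN1r // => /eqP; rewrite oppr_eq0 => /eqP.
have ginj : injective (fun i => (g i).1).
  move=> i i' /= e; apply: injF; rewrite (gP i) (gP i').
  have e2 : (g i).2 = (g i').2.
    move: (cw i) (cw i'); rewrite e.
    case: (g i).2; case: (g i').2 => // h1 h2.
      by move: (M0 (g i').1); rewrite -h1 h2 ltxx.
    by move: (M0 (g i').1); rewrite -h2 h1 ltxx.
  by rewrite e e2.
have onto j : exists i, (g i).1 = j.
  have : j \in codom (fun i => (g i).1).
    have cl : (#|'I_s| <= #|'I_(\dim (fullv : {vspace V}))|)%N by rewrite !card_ord dimE.
    exact: (inj_card_onto ginj cl j).
  by move=> /codomP [i ->]; exists i.
have [i0] := onto (Ordinal s0) => _.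
apply: corner; first exact: (proj1 (wg i0)).
move=> j; have [i gi] := onto j; have := cw i; rewrite gi.
by case: (g i).2 => ?; [right | left].
Qed.

Lemma main_inst : exists P : seq V,
    nonempty_interior B (conv P) /\
    (forall F, is_facet B (conv P) F -> exists2 a, a \in A & facet_normal B (conv P) F a) /\
    exists v, is_vertex B (conv P) v /\ prop_ii B (conv P) v /\
      (forall w, is_vertex B (conv P) w -> prop_ii B (conv P) w -> w = v).
Proof.
exists (Ppts B nK hK); rewrite (conv_Ppts hK bndK).
split; first exact: (interior_of_strict ((Ordinal s0, (false, false)) : Kt) strict_pint).
split; first exact: normal_ok.
exists 0; split; first exact: is_vertex0.
split; first exact: prop_ii0.
by move=> w _ /uniq_w.
Qed.
End Inst.

Unset Implicit Arguments.

Theorem mainTheorem11 (R : realType) (V : vectType R) (A B : seq V) :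
  (1 < \dim (fullv : {vspace V}))%N ->
  uniq A -> (<<A>>%VS = fullv) -> 0 \notin A ->
  (forall a b, a \in A -> b \in A -> a != b -> forall k : R, a != k *: b) ->
  {subset B <= A} -> basis_of fullv B ->
  Gconnected A B ->
  exists P : seq V,
    nonempty_interior B (conv P) /\
    (forall F, is_facet B (conv P) F -> exists2 a, a \in A & facet_normal B (conv P) F a) /\
    exists v, is_vertex B (conv P) v /\ prop_ii B (conv P) v /\
      (forall w, is_vertex B (conv P) w -> prop_ii B (conv P) w -> w = v).
Proof.
move=> dim1 _ _ _ npar BA basB conn.
exact: (main_inst dim1 npar BA basB conn).
Qed.
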